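(* The map $J:\mathbb{D}\times\mathbb{D}\to\mathbb{CP}^3$ defined by $J(z,w)=(z-w:1-zw:i(1+zw):-i(z+w))$ is a biholomorphism from $\mathbb{D}\times\mathbb{D}$ onto $\mathcal{D}_1^{(2)}$.
   Context: $\mathbb{D}$ is the open unit disc in $\mathbb{C}$; points of $\mathbb{CP}^3$ are written in homogeneous coordinates $(s:t:u:v)$. The domain $\mathcal{D}_1^{(2)}\subset\mathbb{CP}^3$ is $\mathcal{D}_1^{(2)}=\{(1:t:u:v): |t|^2+|u|^2-|v|^2>1,\ t^2+u^2-v^2=1,\ \mathrm{Im}(u(\overline{t}+\overline{v}))>0\}\cup\{(0:t:u:v): t^2+u^2-v^2=0,\ \mathrm{Im}(u(\overline{t}+\overline{v}))>0\}$. *)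

(* Defs.v *)
From mathcomp Require Import all_boot all_order all_algebra.
From mathcomp Require Import all_classical all_reals all_analysis.
From mathcomp.real_closed Require Import complex.

(* the complex numbers R[i], in the guise (R[i])^o that carries the
   MathComp-Analysis topology / normed-module structure *)
Notation CC R := ((R[i])%C)^o.
Import Order.TTheory GRing.Theory Num.Theory.
Import numFieldTopology.Exports numFieldNormedType.Exports.
Set Implicit Arguments. Unset Strict Implicit. Unset Printing Implicit Defensive.
Local Open Scope ring_scope.
Local Open Scope complex_scope.
Local Open Scope classical_set_scope.

(* Points of C^n are row vectors 'rV[CC R]_n; they form a normed module over
   the field CC R of complex numbers, so [differentiable] below is complex
   (Frechet) differentiability, i.e. holomorphy. *)

Definition vec4 (R : realType) (s t u v : CC R) : 'rV[CC R]_4 :=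
  \row_(k < 4) nth 0 [:: s; t; u; v] k.

Definition proj_eq (R : realType) (p q : 'rV[CC R]_4) : Prop :=
  p != 0 /\ exists l : CC R, l != 0 /\ q = l *: p.

(* normalised representative in the k-th standard affine chart of CP^3
   (k-th coordinate equal to 1), meaningful when p 0 k != 0 *)
Definition chart (R : realType) (k : 'I_4) (p : 'rV[CC R]_4) : 'rV[CC R]_4 :=
  (p 0 k)^-1 *: p.

Definition bidisc (R : realType) : set 'rV[CC R]_2 :=
  [set a | `|a 0 0| < 1 /\ `|a 0 1| < 1].

(* the domain D_1^(2), as a (scaling invariant) set of representatives in C^4 *)
Definition D12 (R : realType) : set 'rV[CC R]_4 :=
  [set p | (exists t u v : CC R, proj_eq (vec4 1 t u v) p /\
              `|t| ^+ 2 + `|u| ^+ 2 - `|v| ^+ 2 > 1 /\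
              t ^+ 2 + u ^+ 2 - v ^+ 2 = 1 /\
              'Im (u * (t^* + v^*)) > 0)
        \/ (exists t u v : CC R, proj_eq (vec4 0 t u v) p /\
              t ^+ 2 + u ^+ 2 - v ^+ 2 = 0 /\
              'Im (u * (t^* + v^*)) > 0)].

(* the map J, given by its (nowhere vanishing) lift to C^4 *)
Definition Jlift (R : realType) (a : 'rV[CC R]_2) : 'rV[CC R]_4 :=
  let z := a 0 0 in let w := a 0 1 in
  vec4 (z - w) (1 - z * w) ('i * (1 + z * w)) (- 'i * (z + w)).

(* F : C^n -> C^4 \ {0} (a lift) defines a holomorphic map U -> CP^3:
   at each point, in every affine chart containing the image point, the
   affine coordinates are holomorphic *)
Definition holo_to_P3 (R : realType) (n : nat) (U : set 'rV[CC R]_n)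
    (F : 'rV[CC R]_n -> 'rV[CC R]_4) : Prop :=
  forall a, U a -> F a != 0 /\
    forall k : 'I_4, F a 0 k != 0 ->
      differentiable (fun b : 'rV[CC R]_n => chart k (F b) : 'rV[CC R]_4) a.

(* G, defined on representatives of points of S (a subset of CP^3), is
   holomorphic on S: near every point and in every affine chart, G is the
   restriction of a holomorphic function on an open subset of the chart *)
Definition holo_on_P3 (R : realType) (m : nat) (S : set 'rV[CC R]_4)
    (G : 'rV[CC R]_4 -> 'rV[CC R]_m) : Prop :=
  forall p, S p -> forall k : 'I_4, p 0 k != 0 ->
    exists V : set 'rV[CC R]_4, open V /\ V (chart k p) /\
      exists H : 'rV[CC R]_4 -> 'rV[CC R]_m,
        (forall x, V x -> differentiable H x) /\
        (forall q, S q -> q 0 k != 0 -> V (chart k q) -> G q = H (chart k q)).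

(* F is a biholomorphism from U onto S (subset of CP^3): holomorphic,
   maps U into S, injective (as a map to CP^3), and has a holomorphic
   inverse S -> U (which in particular makes it onto S) *)
Definition biholo_onto (R : realType) (n : nat) (U : set 'rV[CC R]_n)
    (F : 'rV[CC R]_n -> 'rV[CC R]_4) (S : set 'rV[CC R]_4) : Prop :=
  [/\ holo_to_P3 U F,
      (forall a, U a -> S (F a)),
      (forall a b, U a -> U b -> proj_eq (F a) (F b) -> a = b) &
      exists G : 'rV[CC R]_4 -> 'rV[CC R]_n,
        (forall p, S p -> U (G p) /\ proj_eq (F (G p)) p) /\
        holo_on_P3 S G].

(* Main.v *)
Require Import Defs.
From mathcomp Require Import all_boot all_order all_algebra.
From mathcomp Require Import all_classical all_reals all_analysis.
From mathcomp.real_closed Require Import complex.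
From mathcomp.algebra_tactics Require Import ring lra.
Import Order.TTheory GRing.Theory Num.Theory.
Import numFieldTopology.Exports numFieldNormedType.Exports.
Set Implicit Arguments. Unset Strict Implicit. Unset Printing Implicit Defensive.
Local Open Scope ring_scope.
Local Open Scope complex_scope.
Local Open Scope classical_set_scope.
Notation Rec := complex.Re.
Notation Imc := complex.Im.
Section Diff.
Variable R : realType.
Variable n : nat.
Implicit Types (f g : 'rV[CC R]_n -> CC R) (a : 'rV[CC R]_n).
Lemma dC (c : CC R) a : differentiable (fun _ : 'rV[CC R]_n => c) a.
Proof. exact: differentiable_cst. Qed.
Lemma dX (j : 'I_n) a : differentiable (fun b : 'rV[CC R]_n => b 0 j) a.
Proof. exact: differentiable_coord. Qed.
Lemma dD f g a : differentiable f a -> differentiable g a -> differentiable (fun b => f b + g b) a.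
Proof. exact: differentiableD. Qed.
Lemma dB f g a : differentiable f a -> differentiable g a -> differentiable (fun b => f b - g b) a.
Proof. exact: differentiableB. Qed.
Lemma dN f a : differentiable f a -> differentiable (fun b => - f b) a.
Proof. exact: differentiableN. Qed.
Lemma dM f g a : differentiable f a -> differentiable g a -> differentiable (fun b => f b * g b) a.
Proof. exact: differentiableM. Qed.
Lemma dV f a : differentiable f a -> f a != 0 -> differentiable (fun b => (f b)^-1) a.
Proof. exact: differentiableV. Qed.
Lemma drow m (F : 'rV[CC R]_n -> 'rV[CC R]_m) a :
  (forall j, differentiable (fun b => F b 0 j) a) -> differentiable F a.
Proof.
move=> h.
have -> : F = \sum_(j < m) (fun b => F b 0 j *: ('e_j : 'rV[CC R]_m)).
  by apply/funext => b; rewrite fct_sumE {1}(row_sum_delta (F b)).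
apply: differentiable_sum => j; exact: differentiableZl.
Qed.
End Diff.
Section J.
Variable R : realType.
Implicit Types (a b : 'rV[CC R]_2).
Lemma J0 b : Jlift b 0 0 = b 0 0 - b 0 1. Proof. by rewrite /Jlift /vec4 mxE. Qed.
Lemma J1 b : Jlift b 0 1 = 1 - b 0 0 * b 0 1. Proof. by rewrite /Jlift /vec4 mxE. Qed.
Lemma J2 b : Jlift b 0 2 = 'i * (1 + b 0 0 * b 0 1). Proof. by rewrite /Jlift /vec4 mxE. Qed.
Lemma J3 b : Jlift b 0 3 = - 'i * (b 0 0 + b 0 1). Proof. by rewrite /Jlift /vec4 mxE. Qed.
Lemma ord4 (P : 'I_4 -> Prop) : P 0 -> P 1 -> P 2 -> P 3 -> forall j, P j.
Proof.
move=> h0 h1 h2 h3 [[|[|[|[|k]]]] Hk].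
- by rewrite (_ : Ordinal Hk = 0) //; apply/val_inj.
- by rewrite (_ : Ordinal Hk = 1) //; apply/val_inj.
- by rewrite (_ : Ordinal Hk = 2) //; apply/val_inj.
- by rewrite (_ : Ordinal Hk = 3) //; apply/val_inj.
- by [].
Qed.
Lemma dJ j a : differentiable (fun b => Jlift b 0 j) a.
Proof.
elim/ord4: j.
- under eq_fun do rewrite J0. by apply: dB; apply: dX.
- under eq_fun do rewrite J1. by apply: dB; [apply: dC| apply: dM; apply: dX].
- under eq_fun do rewrite J2. by apply: dM; [apply: dC| apply: dD; [apply: dC|apply: dM; apply: dX]].
- under eq_fun do rewrite J3. by apply: dM; [apply: dC| apply: dD; apply: dX].
Qed.
Lemma Jnz a : Jlift a != 0.
Proof.
apply/eqP => H.
have h1 : Jlift a 0 1 = 0 by rewrite H mxE.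
have h2 : Jlift a 0 2 = 0 by rewrite H mxE.
rewrite J1 in h1; rewrite J2 in h2.
have e : a 0 0 * a 0 1 = 1 by apply/eqP; rewrite -subr_eq0 -oppr_eq0 opprB h1.
rewrite e in h2.
have := congr1 (@Imc R) h2 => /=. lra.
Qed.
Lemma holoJ : holo_to_P3 (@bidisc R) (@Jlift R).
Proof.
move=> a _; split; first exact: Jnz.
move=> k Hk; apply: drow => j.
rewrite /chart; under eq_fun do rewrite mxE.
apply: dM; last exact: dJ.
by apply: dV => //; exact: dJ.
Qed.
End J.
Section Alg.
Variable R : realType.
Implicit Types (q : 'rV[CC R]_4) (x y z w l : CC R).
Definition Nq q : CC R := `|q 0 1|^+2 + `|q 0 2|^+2 - `|q 0 3|^+2 - `|q 0 0|^+2.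
Definition Qd q : CC R := q 0 1 ^+2 + q 0 2 ^+2 - q 0 3 ^+2 - q 0 0 ^+2.
Definition Iq q : CC R := 'Im (q 0 2 * ((q 0 1)^* + (q 0 3)^*)).
Definition r2 x : R := Rec x ^+2 + Imc x ^+2.
Definition Jv z w : 'rV[CC R]_4 := vec4 (z - w) (1 - z*w) ('i*(1+z*w)) (-'i*(z+w)).
Lemma normr2 x : `|x|^+2 = (r2 x)%:C. Proof. by rewrite /r2 add_Re2_Im2. Qed.
Lemma ImE x : 'Im x = (Imc x)%:C. Proof. by rewrite complexIm. Qed.
Lemma v40 x y z w : vec4 x y z w 0 0 = x. Proof. by rewrite mxE. Qed.
Lemma v41 x y z w : vec4 x y z w 0 1 = y. Proof. by rewrite mxE. Qed.
Lemma v42 x y z w : vec4 x y z w 0 2 = z. Proof. by rewrite mxE. Qed.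
Lemma v43 x y z w : vec4 x y z w 0 3 = w. Proof. by rewrite mxE. Qed.
Lemma NqZ l q : Nq (l *: q) = `|l|^+2 * Nq q.
Proof. rewrite /Nq !mxE !normrM !exprMn; ring. Qed.
Lemma QdZ l q : Qd (l *: q) = l^+2 * Qd q.
Proof. rewrite /Qd !mxE; ring. Qed.
Lemma IqZ l q : Iq (l *: q) = `|l|^+2 * Iq q.
Proof.
rewrite /Iq !mxE !rmorphM normCK.
rewrite (_ : _ * _ = l * l^* * (q 0 2 * ((q 0 1)^* + (q 0 3)^*))); last by ring.
by rewrite ImMl // -normCK realX // normr_real.
Qed.
Lemma Iq_J z w : Iq (Jv z w) = (((1 - r2 w) * r2 (z + 'i) + (1 - r2 z) * r2 (w + 'i)) / 2)%:C.
Proof.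
rewrite /Iq /Jv v41 v42 v43 ImE.
case: z => a b; case: w => c d.
rewrite /r2 /=; congr (_%:C); by field.
Qed.
Lemma Nq_J z w : Nq (Jv z w) = (2 * (1 - r2 z) * (1 - r2 w))%:C.
Proof.
rewrite /Nq /Jv v40 v41 v42 v43 !normr2.
case: z => a b; case: w => c d.
rewrite /r2 /=; apply/eqP; rewrite eq_complex /=; apply/andP; split; apply/eqP; ring.
Qed.
Lemma Qd_J z w : Qd (Jv z w) = 0.
Proof.
rewrite /Qd /Jv v40 v41 v42 v43.
have hi : 'i * 'i = -1 :> CC R by apply/eqP; rewrite eq_complex /=; apply/andP; split; apply/eqP; ring.
ring: hi.
Qed.
Lemma ltcR0 (r : R) : (0 < (r%:C : CC R)) = (0 < r).
Proof. by rewrite ltcE /= eqxx. Qed.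
Lemma r2_ge0 x : 0 <= r2 x.
Proof. rewrite /r2; nra. Qed.
Lemma norm_lt1 x : (`|x| < 1) = (r2 x < 1).
Proof. by rewrite -(@expr_lt1 _ 2) // normr2 ltcE /= eqxx. Qed.
Lemma r2i x : r2 x < 1 -> 0 < r2 (x + 'i).
Proof. case: x => a b; rewrite /r2 /= => h; nra. Qed.
Lemma J_pos z w : `|z| < 1 -> `|w| < 1 -> 0 < Iq (Jv z w) /\ 0 < Nq (Jv z w).
Proof.
rewrite !norm_lt1 Iq_J Nq_J !ltcR0 => hz hw.
have hA := r2i hz; have hB := r2_ge0 (w + 'i).
have h1 : 0 < (1 - r2 w) * r2 (z + 'i) by apply: mulr_gt0; lra.
have h2 : 0 <= (1 - r2 z) * r2 (w + 'i) by apply: mulr_ge0; lra.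
split; first lra.
have h3 : 0 < (1 - r2 z) * (1 - r2 w) by apply: mulr_gt0; lra.
lra.
Qed.
Lemma J_disc z w : 0 < Iq (Jv z w) -> (z = w \/ 0 < Nq (Jv z w)) -> `|z| < 1 /\ `|w| < 1.
Proof.
rewrite !norm_lt1 Iq_J Nq_J !ltcR0 => hI.
have hA := r2_ge0 (z + 'i); have hB := r2_ge0 (w + 'i).
case=> [e|hN].
  subst w; have : 0 < (1 - r2 z) * r2 (z + 'i) by lra.
  move=> h; suff : r2 z < 1 by move=> ?; split.
  rewrite ltNge; apply/negP => hz.
  have : (1 - r2 z) * r2 (z + 'i) <= 0 by apply: mulr_le0_ge0 => //; lra.
  lra.
have hP : 0 < (1 - r2 z) * (1 - r2 w) by lra.
suff : ~ (1 <= r2 z \/ 1 <= r2 w).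
  move=> h; split; rewrite ltNge; apply/negP => ?; apply: h; by [left|right].
move=> hc.
have [hZ hW] : r2 z > 1 /\ r2 w > 1.
  case: hc => hc.
  - have q1 : 1 - r2 z <= 0 by lra.
    have q2 : 1 - r2 w < 0.
      rewrite ltNge; apply/negP => q3.
      have : (1 - r2 z) * (1 - r2 w) <= 0 by apply: mulr_le0_ge0.
      lra.
    have q4 : 1 - r2 z < 0.
      rewrite ltNge; apply/negP => q3.
      have : (1 - r2 z) * (1 - r2 w) <= 0 by apply: mulr_ge0_le0; lra.
      lra.
    split; lra.
  - have q1 : 1 - r2 w <= 0 by lra.
    have q2 : 1 - r2 z < 0.
      rewrite ltNge; apply/negP => q3.
      have : (1 - r2 z) * (1 - r2 w) <= 0 by apply: mulr_ge0_le0.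
      lra.
    have q4 : 1 - r2 w < 0.
      rewrite ltNge; apply/negP => q3.
      have : (1 - r2 z) * (1 - r2 w) <= 0 by apply: mulr_le0_ge0; lra.
      lra.
    split; lra.
have h1 : (1 - r2 w) * r2 (z + 'i) <= 0 by apply: mulr_le0_ge0 => //; lra.
have h2 : (1 - r2 z) * r2 (w + 'i) <= 0 by apply: mulr_le0_ge0 => //; lra.
lra.
Qed.
Lemma hi : 'i * 'i = -1 :> CC R.
Proof. by apply/eqP; rewrite eq_complex /=; apply/andP; split; apply/eqP; ring. Qed.
Lemma Iq_iu x u v : Iq (vec4 x ('i*u) u v) = (-(r2 u) + (Imc u * Rec v - Rec u * Imc v))%:C.
Proof.
rewrite /Iq v41 v42 v43 ImE; case: u => e f; case: v => g h; rewrite /r2 /=; congr (_%:C); ring.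
Qed.
Lemma Nq_iu x u v : Nq (vec4 x ('i*u) u v) = (2 * r2 u - r2 v - r2 x)%:C.
Proof.
rewrite /Nq v40 v41 v42 v43 !normr2; case: u => e f; case: v => g h; case: x => k m.
rewrite /r2 /=; apply/eqP; rewrite eq_complex /=; apply/andP; split; apply/eqP; ring.
Qed.
Lemma r20 : r2 0 = 0.
Proof. rewrite /r2 /=; ring. Qed.
Lemma vec4_eta q : q = vec4 (q 0 0) (q 0 1) (q 0 2) (q 0 3).
Proof.
apply/rowP => j; rewrite [RHS]mxE; elim/ord4: j => //=; congr (q _ _); exact/val_inj.
Qed.
Lemma tiu_nz q : Qd q = 0 -> 0 < Iq q -> (q 0 0 = 0 \/ 0 < Nq q) -> q 0 1 - 'i * q 0 2 != 0.
Proof.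
move=> hQ hI hN; apply/eqP => h.
have ht : q 0 1 = 'i * q 0 2 by apply/subr0_eq.
move: hQ hI hN; rewrite (vec4_eta q) ht.
set x := q 0 0; set u := q 0 2; set v := q 0 3.
rewrite /Qd v40 v41 v42 v43.
have -> : ('i * u) ^+ 2 + u ^+ 2 - v ^+ 2 - x ^+ 2 = - (v^+2 + x^+2) by ring: hi.
move/eqP; rewrite oppr_eq0 addr_eq0 => /eqP hv.
have hr : r2 x = r2 v.
  apply: (@complexI R); rewrite -!normr2 -!normrX -[x ^+ 2]opprK -hv normrN //.
rewrite Iq_iu ltcR0 Nq_iu ltcR0 => hI hN.
have Lg : r2 u * r2 v - (Imc u * Rec v - Rec u * Imc v)^+2 = (Rec u * Rec v + Imc u * Imc v)^+2.
  rewrite /r2; ring.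
have hsq := sqr_ge0 (Rec u * Rec v + Imc u * Imc v).
have hu := r2_ge0 u; have hvv := r2_ge0 v.
set K := (Imc u * Rec v - Rec u * Imc v) in hI Lg.
case: hN => [hx|hN].
  rewrite -hr hx r20 mulr0 in Lg.
  clear -hI Lg hu hsq; nra.
have h1 : r2 v < r2 u by lra.
have h2 : r2 u * r2 v <= r2 u * r2 u by apply: ler_wpM2l => //; lra.
have h3 : r2 u * r2 u < K * K by apply: ltr_pM; lra.
clear -h2 h3 Lg hsq; nra.
Qed.
Lemma D12_hom p : D12 p -> [/\ p != 0, Qd p = 0, 0 < Iq p & (p 0 0 = 0 \/ 0 < Nq p)].
Proof.
have hl : forall l : CC R, l != 0 -> 0 < `|l| ^+ 2 by move=> l hl; rewrite exprn_gt0 // normr_gt0.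
case=> [[t [u [v [[Hnz [l [Hl ->]]] [HN [HQ HI]]]]]] | [t [u [v [[Hnz [l [Hl ->]]] [HQ HI]]]]]].
- split.
  + by rewrite scaler_eq0 negb_or Hl.
  + by rewrite QdZ /Qd v40 v41 v42 v43 expr1n HQ subrr mulr0.
  + by rewrite IqZ; apply: mulr_gt0; [exact: hl | rewrite /Iq v41 v42 v43].
  + right; rewrite NqZ; apply: mulr_gt0; first exact: hl.
    by rewrite /Nq v40 v41 v42 v43 normr1 expr1n subr_gt0.
- split.
  + by rewrite scaler_eq0 negb_or Hl.
  + by rewrite QdZ /Qd v40 v41 v42 v43 expr0n /= subr0 HQ mulr0.
  + by rewrite IqZ; apply: mulr_gt0; [exact: hl | rewrite /Iq v41 v42 v43].
  + by left; rewrite mxE v40 mulr0.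
Qed.
Lemma hom_D12 p : Qd p = 0 -> 0 < Iq p -> (p 0 0 = 0 \/ 0 < Nq p) -> D12 p.
Proof.
move=> hQ hI hN.
have pnz : p != 0.
  apply/eqP => e; move: hI; rewrite e.
  have -> : (0 : 'rV[CC R]_4) = 0 *: 0 by rewrite scale0r.
  by rewrite IqZ normr0 expr0n /= mul0r ltxx.
case: (eqVneq (p 0 0) 0) => h0.
- right; exists (p 0 1), (p 0 2), (p 0 3); split; [split|split].
  + by rewrite {1}(vec4_eta p) h0 in pnz.
  + by exists 1; split; [exact: oner_neq0 | rewrite scale1r {1}(vec4_eta p) h0].
  + by move: hQ; rewrite /Qd h0 expr0n /= subr0.
  + exact: hI.
- left; set s := p 0 0.
  exists (p 0 1 / s), (p 0 2 / s), (p 0 3 / s).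
  have e : vec4 1 (p 0 1 / s) (p 0 2 / s) (p 0 3 / s) = s^-1 *: p.
    apply/rowP; elim/ord4; rewrite !mxE /=.
    - by rewrite mulVf.
    - by rewrite mulrC.
    - by rewrite mulrC.
    - by rewrite mulrC.
  have hl : 0 < `|s^-1| ^+ 2 by rewrite exprn_gt0 // normr_gt0 invr_eq0.
  have hN' : 0 < Nq (vec4 1 (p 0 1 / s) (p 0 2 / s) (p 0 3 / s)).
    rewrite e NqZ; apply: mulr_gt0 => //.
    by case: hN => // h; rewrite h eqxx in h0.
  have hQ' : Qd (vec4 1 (p 0 1 / s) (p 0 2 / s) (p 0 3 / s)) = 0 by rewrite e QdZ hQ mulr0.
  have hI' : 0 < Iq (vec4 1 (p 0 1 / s) (p 0 2 / s) (p 0 3 / s)) by rewrite e IqZ; apply: mulr_gt0.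
  move: hN' hQ' hI'; rewrite /Nq /Qd /Iq v40 v41 v42 v43 normr1 expr1n subr_gt0 => hN' /eqP hQ' hI'.
  split; [split|split; [exact: hN'|split; [|exact: hI']]].
  + by apply/eqP => e0; move/rowP: e0 => /(_ 0); rewrite !mxE /= => /eqP; rewrite oner_eq0.
  + exists s; split => //; by rewrite e scalerA mulfV // scale1r.
  + by apply/eqP; rewrite -subr_eq0.
Qed.
End Alg.

Section Main.
Variable R : realType.
Implicit Types (p q : 'rV[CC R]_4) (a b : 'rV[CC R]_2).
Definition Gz p : CC R := (p 0 0 + 'i * p 0 3) / (p 0 1 - 'i * p 0 2).
Definition Gw p : CC R := ('i * p 0 3 - p 0 0) / (p 0 1 - 'i * p 0 2).
Definition G p : 'rV[CC R]_2 := \row_(j < 2) nth 0 [:: Gz p; Gw p] j.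
Lemma G00 p : G p 0 0 = Gz p. Proof. by rewrite mxE. Qed.
Lemma G01 p : G p 0 1 = Gw p. Proof. by rewrite mxE. Qed.
Lemma ord2 (P : 'I_2 -> Prop) : P 0 -> P 1 -> forall j, P j.
Proof.
move=> h0 h1 [[|[|k]] Hk].
- by rewrite (_ : Ordinal Hk = 0) //; apply/val_inj.
- by rewrite (_ : Ordinal Hk = 1) //; apply/val_inj.
- by [].
Qed.
Lemma JliftE a : Jlift a = Jv (a 0 0) (a 0 1). Proof. by []. Qed.
Lemma two_nz : (2 : CC R) != 0. Proof. by rewrite pnatr_eq0. Qed.
Lemma half (x y : CC R) : 2 * x = y -> x = y / 2.
Proof. by move=> <-; rewrite mulrC mulKf // two_nz. Qed.
Lemma GJ a : G (Jlift a) = a.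
Proof.
have hd : Jlift a 0 1 - 'i * Jlift a 0 2 = 2 by rewrite J1 J2; ring: (@hi R).
apply/rowP; elim/ord2; rewrite mxE /= /Gz /Gw hd J0 J3; symmetry; apply: half; ring: (@hi R).
Qed.
Lemma GZ c p : c != 0 -> G (c *: p) = G p.
Proof.
move=> hc.
have gen : forall x y : CC R, (c * x) / (c * y) = x / y.
  by move=> x y; rewrite invfM mulrACA divff // mul1r.
apply/rowP; elim/ord2; rewrite !mxE /= /Gz /Gw !mxE.
- have -> : c * p 0 1 - 'i * (c * p 0 2) = c * (p 0 1 - 'i * p 0 2) by ring.
  have -> : c * p 0 0 + 'i * (c * p 0 3) = c * (p 0 0 + 'i * p 0 3) by ring.
  exact: gen.
- have -> : c * p 0 1 - 'i * (c * p 0 2) = c * (p 0 1 - 'i * p 0 2) by ring.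
  have -> : 'i * (c * p 0 3) - c * p 0 0 = c * ('i * p 0 3 - p 0 0) by ring.
  exact: gen.
Qed.
Lemma keyJ p : Qd p = 0 -> p 0 1 - 'i * p 0 2 != 0 ->
  p = ((p 0 1 - 'i * p 0 2) / 2) *: Jv (Gz p) (Gw p).
Proof.
rewrite /Qd /Gz /Gw => hQ hd.
set d := p 0 1 - 'i * p 0 2 in hd *.
have ht : p 0 1 = d + 'i * p 0 2 by rewrite /d subrK.
have he : d * d^-1 = 1 by rewrite mulfV.
have hv : p 0 3 ^+ 2 = d ^+ 2 + 2 * 'i * d * p 0 2 - p 0 0 ^+ 2.
  have -> : p 0 3 ^+ 2 = p 0 1 ^+ 2 + p 0 2 ^+ 2 - p 0 0 ^+ 2.
    by apply/eqP; rewrite -subr_eq0 -oppr_eq0 -[X in _ == X]hQ; apply/eqP; ring.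
  rewrite ht; ring: (@hi R).
clearbody d; set e := d^-1 in he *; clearbody e.
apply/rowP; elim/ord4; rewrite mxE /Jv ?v40 ?v41 ?v42 ?v43 mulrAC; apply: half.
- ring: he.
- rewrite ht; ring: (@hi R) he hv.
- ring: (@hi R) he hv.
- ring: (@hi R) he.
Qed.
Lemma dGz (x : 'rV[CC R]_4) : x 0 1 - 'i * x 0 2 != 0 -> differentiable Gz x.
Proof.
move=> hx; apply: dM.
  by apply: dD; [apply: dX | apply: dM; [apply: dC | apply: dX]].
apply: dV => //.
by apply: dB; [apply: dX | apply: dM; [apply: dC | apply: dX]].
Qed.
Lemma dGw (x : 'rV[CC R]_4) : x 0 1 - 'i * x 0 2 != 0 -> differentiable Gw x.
Proof.
move=> hx; apply: dM.
  by apply: dB; [apply: dM; [apply: dC | apply: dX] | apply: dX].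
apply: dV => //.
by apply: dB; [apply: dX | apply: dM; [apply: dC | apply: dX]].
Qed.
Lemma holoG : holo_on_P3 (@D12 R) G.
Proof.
move=> p Dp k hk.
have [pnz hQ hI hN] := D12_hom Dp.
have hd := tiu_nz hQ hI hN.
pose f := fun x : 'rV[CC R]_4 => x 0 1 - 'i * x 0 2.
have fc : continuous f.
  move=> x; apply: differentiable_continuous.
  by apply: dB; [apply: dX | apply: dM; [apply: dC | apply: dX]].
exists [set x | f x != 0]; split; [|split].
- have -> : [set x | f x != 0] = ~` (f @^-1` [set 0]).
    by apply/seteqP; split => x /=; [move=> /eqP | move=> /eqP].
  apply: closed_openC; apply: (proj1 (continuous_closedP f)) => //.
  apply: (proj1 accessible_finite_set_closed); last exact: finite_set1.
  exact/hausdorff_accessible/norm_hausdorff.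
- rewrite /= /f /chart !mxE.
  have -> : (p 0 k)^-1 * p 0 1 - 'i * ((p 0 k)^-1 * p 0 2) = (p 0 k)^-1 * (p 0 1 - 'i * p 0 2) by ring.
  by rewrite mulf_neq0 // invr_eq0.
- exists G; split.
  + move=> x /= hx; apply: drow; elim/ord2.
    * under eq_fun do rewrite G00. exact: dGz.
    * under eq_fun do rewrite G01. exact: dGw.
  + move=> q _ hq _; rewrite /chart GZ // invr_eq0 //.
Qed.
Lemma surjG p : D12 p -> bidisc (G p) /\ proj_eq (Jlift (G p)) p.
Proof.
move=> Dp; have [pnz hQ hI hN] := D12_hom Dp.
have hd := tiu_nz hQ hI hN.
have key := keyJ hQ hd.
set l := (p 0 1 - 'i * p 0 2) / 2 in key.
have hl : l != 0 by rewrite /l mulf_neq0 // invr_eq0 two_nz.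
have hl2 : 0 < `|l| ^+ 2 by rewrite exprn_gt0 // normr_gt0.
have eJ : Jlift (G p) = Jv (Gz p) (Gw p) by rewrite JliftE G00 G01.
split; last first.
  by split; [exact: Jnz | exists l; split => //; rewrite eJ].
rewrite /bidisc /= G00 G01; apply: J_disc.
  by move: hI; rewrite {1}key IqZ pmulr_rgt0.
case: hN => [h0|hN]; last by right; move: hN; rewrite {1}key NqZ pmulr_rgt0.
left; move: h0; rewrite {1}key mxE /Jv v40 => /eqP; rewrite mulf_eq0 (negbTE hl) /= subr_eq0.
by move/eqP.
Qed.
End Main.

Theorem theorem4p8 (R : realType) :
  biholo_onto (@bidisc R) (@Jlift R) (@D12 R).
Proof.
split.
- exact: holoJ.
- move=> a [hz hw]; rewrite JliftE.
  have [hI hN] := J_pos hz hw.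
  by apply: hom_D12 => //; [exact: Qd_J | right].
- move=> a b _ _ [_ [l [hl e]]].
  by rewrite -(GJ a) -(GJ b) e GZ.
- exists (@G R); split; [exact: surjG | exact: holoG].
Qed.
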